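(* Let $n\ge 1$, $k\ge 0$, and let $w(u_1,\dots,u_n)$ be a word lying in the commutator subgroup of the free group $\langle u_1,\dots,u_n\rangle$. Let $G$ be any finite group and $C_1,\dots,C_k$ any conjugacy classes of $G$. Then the number of tuples $(u_1,\dots,u_n,z_1,\dots,z_k)$ with $u_i\in G$, $z_i\in C_i$ and $w(u_1,\dots,u_n)\,z_1\cdots z_k=1$ is divisible by $|G|$. *)

(* Defs.v *)
From HB Require Import structures.
From mathcomp Require Import all_boot all_order all_fingroup.
Set Implicit Arguments. Unset Strict Implicit. Unset Printing Implicit Defensive.

(* Words in the free group on generators u_0, ..., u_{n-1}:
   a letter (i, false) stands for u_i, a letter (i, true) for u_i^-1. *)
Definition word (n : nat) := seq ('I_n * bool).

Definition word_inv n (w : word n) : word n :=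
  rev (map (fun l : 'I_n * bool => (l.1, ~~ l.2)) w).

Inductive free_step n : word n -> word n -> Prop :=
| FreeStep (a b : word n) (i : 'I_n) (e : bool) :
    free_step (a ++ (i, e) :: (i, ~~ e) :: b) (a ++ b).

Inductive free_equiv n : word n -> word n -> Prop :=
| FE_refl w : free_equiv w w
| FE_step w1 w2 : free_step w1 w2 -> free_equiv w1 w2
| FE_sym w1 w2 : free_equiv w1 w2 -> free_equiv w2 w1
| FE_trans w1 w2 w3 : free_equiv w1 w2 -> free_equiv w2 w3 -> free_equiv w1 w3.

Inductive in_commutator_subgroup n : word n -> Prop :=
| CS_nil : in_commutator_subgroup [::]
| CS_comm (a b : word n) :
    in_commutator_subgroup (word_inv a ++ word_inv b ++ a ++ b)
| CS_mul w1 w2 : in_commutator_subgroup w1 -> in_commutator_subgroup w2 ->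
    in_commutator_subgroup (w1 ++ w2)
| CS_inv w : in_commutator_subgroup w -> in_commutator_subgroup (word_inv w)
| CS_equiv w1 w2 : free_equiv w1 w2 -> in_commutator_subgroup w1 ->
    in_commutator_subgroup w2.

Definition word_eval (gT : finGroupType) n (u : 'I_n -> gT) (w : word n) : gT :=
  (\prod_(l <- w) (if l.2 then (u l.1)^-1 else u l.1))%g.

(* Main.v *)
Require Import Defs.
From HB Require Import structures.
From mathcomp Require Import all_boot all_order all_fingroup.
From mathcomp Require Import commutator.

Module Part1.
Local Set Implicit Arguments. Local Unset Strict Implicit.
Import GroupScope.
Local Open Scope group_scope.

Section Words.
Variables (gT : finGroupType) (n : nat) (u : 'I_n -> gT).

Lemma we_nil : word_eval u [::] = 1.
Proof. by rewrite /word_eval big_nil. Qed.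

Lemma we_cons l w : word_eval u (l :: w) =
  (if l.2 then (u l.1)^-1 else u l.1) * word_eval u w.
Proof. by rewrite /word_eval big_cons. Qed.

Lemma we_cat w1 w2 : word_eval u (w1 ++ w2) = word_eval u w1 * word_eval u w2.
Proof. by rewrite /word_eval big_cat. Qed.

Lemma we_inv w : word_eval u (word_inv w) = (word_eval u w)^-1.
Proof.
elim: w => [|l w IH]; first by rewrite /word_inv /= we_nil invg1.
rewrite /word_inv map_cons rev_cons -cats1 we_cat -/(word_inv w) IH.
rewrite we_cons we_cons we_nil mulg1 invMg; congr (_ * _).
by case: (l.2) => /=; rewrite ?invgK.
Qed.

Lemma we_equiv w1 w2 : free_equiv w1 w2 -> word_eval u w1 = word_eval u w2.
Proof.
elim=> [w|x y st|x y _ IH|x y z _ IH1 _ IH2].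
- by [].
- case: st => a b i e; rewrite !we_cat !we_cons.
  by case: e => /=; rewrite ?mulKg ?mulKVg ?invgK.
- by rewrite IH.
- by rewrite IH1 IH2.
Qed.

Lemma we_mem (B : {group gT}) w : (forall i, u i \in B) -> word_eval u w \in B.
Proof.
move=> uB; elim: w => [|l w IH]; first by rewrite we_nil group1.
by rewrite we_cons groupM // ; case: (l.2); rewrite ?groupV uB.
Qed.

Lemma we_comm (B : {group gT}) w : (forall i, u i \in B) ->
  in_commutator_subgroup w -> word_eval u w \in [~: B, B].
Proof.
move=> uB; elim=> [|a b|w1 w2 _ IH1 _ IH2|w0 _ IH|w1 w2 E _ IH].
- by rewrite we_nil group1.
- rewrite !we_cat !we_inv !mulgA -mulgA -(mulgA _^-1) -conjgE -commgEl.
  by apply: mem_commg; apply: we_mem.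
- by rewrite we_cat groupM.
- by rewrite we_inv groupV.
- by rewrite -(we_equiv E).
Qed.
End Words.

End Part1.
Import Part1.

Module Part2.
Local Set Implicit Arguments. Local Unset Strict Implicit.
Import GroupScope.
Local Open Scope group_scope.

Section Main.
Variables (gT : finGroupType) (n k : nat) (hn : 0 < n).
Definition i0 : 'I_n := Ordinal hn.
Notation P := ({ffun 'I_n -> gT} * {ffun 'I_k -> gT})%type.

Definition tt_ (p : P) := p.1 i0.
Definition S_ (p : P) : {set gT} :=
  [set x | ([exists i, (i != i0) && (x == p.1 i)] || [exists i, x == p.2 i])].
Definition H_ (p : P) := <<class_support (S_ p) <[tt_ p]> >>.
Definition tr (p : P) c : P :=
  ([ffun i => if i == i0 then p.1 i0 * c else p.1 i], p.2).
Definition cj g (p : P) : P := ([ffun i => p.1 i ^ g], [ffun i => p.2 i ^ g]).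

Lemma SH p : S_ p \subset H_ p.
Proof. exact: subset_trans (sub_class_support _ _) (subset_gen _). Qed.

Lemma tN p : tt_ p \in 'N(H_ p).
Proof.
apply: (subsetP (norm_gen _)); apply: (subsetP (class_support_norm _ _)).
exact: cycle_id.
Qed.

Lemma fixC (A : {set gT}) x c : x \in A -> c \in 'C(A) -> x ^ c = x.
Proof. by move=> xA cA; apply/conjg_fixP; rewrite /commg conjgE -(centP cA x xA) mulKg mulVg. Qed.

Lemma SL p c x j : c \in 'C(H_ p) -> x \in H_ p ->
  x ^ ((tt_ p * c) ^+ j) = x ^ (tt_ p ^+ j).
Proof.
move=> cC xH; elim: j => [|j IH]; first by rewrite !expg0.
rewrite !expgSr !conjgM IH (fixC _ cC) //.
by rewrite memJ_norm ?groupX ?tN // memJ_norm ?groupX ?tN.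
Qed.

Lemma S_tr p c : S_ (tr p c) = S_ p.
Proof.
apply/setP => x; rewrite !inE; congr (_ || _); apply: eq_existsb => i.
by rewrite ffunE; case: eqP.
Qed.

Lemma tt_tr p c : tt_ (tr p c) = tt_ p * c.
Proof. by rewrite /tt_ ffunE eqxx. Qed.

Lemma tr_tr p c d : tr (tr p c) d = tr p (c * d).
Proof.
case: p => a b; rewrite /tr /=; congr pair; apply/ffunP => i.
by rewrite !ffunE eqxx mulgA; case: eqP.
Qed.

Lemma tr1 p : tr p 1 = p.
Proof.
case: p => a b; rewrite /tr /=; congr pair; apply/ffunP => i.
by rewrite !ffunE mulg1; case: eqP => // ->.
Qed.

Lemma Htr_sub p c : c \in 'C(H_ p) -> H_ (tr p c) \subset H_ p.
Proof.
move=> cC; rewrite /H_ gen_subG; apply/subsetP => y /imset2P [x z xS zC ->].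
case/cycleP: zC => j ->; rewrite S_tr in xS; rewrite tt_tr SL //.
  by apply: mem_gen; apply: memJ_class_support => //; apply: mem_cycle.
exact: (subsetP (SH p)).
Qed.

Lemma Htr p c : c \in 'C(H_ p) -> H_ (tr p c) = H_ p.
Proof.
move=> cC; apply/eqP; rewrite eqEsubset Htr_sub //=.
have e : tr (tr p c) c^-1 = p by rewrite tr_tr mulgV tr1.
rewrite -{1}e Htr_sub // groupV.
exact: (subsetP (centS (Htr_sub cC))).
Qed.

Lemma cjK g p : cj g^-1 (cj g p) = p.
Proof.
case: p => a b; rewrite /cj /=; congr pair; apply/ffunP => i;
by rewrite !ffunE conjgK.
Qed.

Lemma cj_cj g h p : cj h (cj g p) = cj (g * h) p.
Proof.
case: p => a b; rewrite /cj /=; congr pair; apply/ffunP => i;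
by rewrite !ffunE conjgM.
Qed.

Lemma HJ_sub g p : H_ (cj g p) \subset H_ p :^ g.
Proof.
rewrite /H_ gen_subG; apply/subsetP => y /imset2P [x z xS zC ->].
have [x' x'S ->] : exists2 x', x' \in S_ p & x = x' ^ g.
  move: xS; rewrite !inE => /orP [/existsP [i /andP [ni /eqP ->]]|
                                 /existsP [i /eqP ->]]; rewrite ffunE.
    by exists (p.1 i) => //; rewrite inE; apply/orP; left; apply/existsP; exists i; rewrite ni eqxx.
  by exists (p.2 i) => //; rewrite inE; apply/orP; right; apply/existsP; exists i.
move: zC; rewrite /tt_ ffunE => /cycleP [j ->].
rewrite -conjXg -conjJg memJ_conjg; apply: mem_gen; apply: memJ_class_support => //.
exact: mem_cycle.
Qed.

Lemma HJ g p : H_ (cj g p) = H_ p :^ g.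
Proof.
apply/eqP; rewrite eqEcard HJ_sub cardJg /=.
have := HJ_sub g^-1 (cj g p); rewrite cjK => /subset_leq_card.
by rewrite cardJg.
Qed.

Lemma we_pair (u v : 'I_n -> gT) w :
  word_eval (fun i => (u i, v i) : gT * gT) w = (word_eval u w, word_eval v w).
Proof.
elim: w => [|l w IH]; first by rewrite !we_nil.
by rewrite !we_cons IH; case: (l.2).
Qed.

Lemma we_tr p c w : c \in 'C(H_ p) -> in_commutator_subgroup w ->
  word_eval (tr p c).1 w = word_eval p.1 w.
Proof.
move=> cC hw.
pose D := [set x : gT * gT | (x.1 \in H_ p) && (x.1 == x.2)].
have gD : group_set D.
  apply/group_setP; split; first by rewrite inE /= group1 eqxx.
  move=> x y; rewrite !inE => /andP [x1 /eqP x12] /andP [y1 /eqP y12].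
  by rewrite /= groupM // x12 y12 eqxx.
pose DG := Group gD.
pose g0 : gT * gT := (tt_ p, tt_ p * c).
have g0N : g0 \in 'N(DG).
  apply/normP; apply/eqP; rewrite eqEcard cardJg leqnn andbT.
  apply/subsetP => _ /imsetP [x xD ->].
  move: xD; rewrite !inE => /andP [x1 /eqP x12].
  have e1 : (x ^ g0).1 = x.1 ^ tt_ p by [].
  have e2 : (x ^ g0).2 = x.2 ^ (tt_ p * c) by [].
  have xt : x.1 ^ tt_ p \in H_ p by rewrite memJ_norm // tN.
  by rewrite e1 e2 -x12 conjgM (fixC xt cC) xt eqxx.
pose M := (DG <*> <[g0]>)%G.
have MN : M \subset 'N(DG) by rewrite join_subG normG cycle_subG g0N.
have Mder : [~: M, M] \subset DG.
  apply: der1_min => //.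
  rewrite quotientYidl ?cycle_subG //.
  exact/quotient_abelian/cycle_abelian.
have uM : forall i, ((p.1 i, (tr p c).1 i) : gT * gT) \in M.
  move=> i; rewrite /tr /= ffunE; case: eqP => [->|ni].
    by apply: (subsetP (joing_subr _ _)); apply: cycle_id.
  apply: (subsetP (joing_subl _ _)); rewrite inE /= eqxx andbT.
  apply: (subsetP (SH p)); rewrite inE; apply/orP; left; apply/existsP.
  by exists i; rewrite eqxx andbT; apply/eqP.
have := subsetP Mder _ (we_comm uM hw).
by rewrite we_pair inE /= => /andP [_ /eqP ->].
Qed.

End Main.

End Part2.
Import Part2.

Module Part3.
Local Set Implicit Arguments. Local Unset Strict Implicit.
Import GroupScope.
Local Open Scope group_scope.

Section Count.
Variables (gT : finGroupType) (n k : nat) (hn : 0 < n).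
Notation P := ({ffun 'I_n -> gT} * {ffun 'I_k -> gT})%type.
Notation tt_ := (@tt_ gT n k hn).
Notation H_ := (@H_ gT n k hn).
Notation S_ := (@S_ gT n k hn).
Notation tr := (@tr gT n k hn).
Notation cj := (@cj gT n k).
Notation i0 := (i0 hn).

Definition O (p : P) : {set P} :=
  [set cj x.1 (tr p x.2) | x in setX [set: gT] 'C(H_ p)].

Lemma tr_cj g p c : tr (cj g p) c = cj g (tr p (c ^ g^-1)).
Proof.
case: p => a b; rewrite /tr /cj /=; congr pair; apply/ffunP => i.
rewrite !ffunE; case: eqP => // _; rewrite ?ffunE.
by rewrite conjMg conjgKV.
Qed.

Lemma cj1 p : cj 1 p = p.
Proof.
case: p => a b; rewrite /cj /=; congr pair; apply/ffunP => i;
by rewrite !ffunE conjg1.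
Qed.

Lemma O_self p : p \in O p.
Proof.
apply/imsetP; exists (1, 1); first by rewrite inE /= inE group1.
by rewrite /= tr1 cj1.
Qed.

Lemma O_trans p q : q \in O p -> O q \subset O p.
Proof.
case/imsetP => [[g c]]; rewrite inE /= => /andP [_ cC] ->.
apply/subsetP => y /imsetP [[g' c']]; rewrite inE /= => /andP [_].
rewrite HJ Htr // centJ mem_conjg => dC ->.
rewrite tr_cj tr_tr cj_cj; apply/imsetP; exists (g * g', c * c' ^ g^-1) => //.
by rewrite inE /= inE groupM.
Qed.

Lemma tNC p : tt_ p \in 'N('C(H_ p)).
Proof. exact: (subsetP (cent_norm _)) (tN _ _). Qed.

Lemma fiber p g0 c0 : c0 \in 'C(H_ p) ->
  [set x in setX [set: gT] 'C(H_ p) | cj x.1 (tr p x.2) == cj g0 (tr p c0)]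
  = [set (kk * g0, kk ^ tt_ p * c0 * kk^-1) | kk in 'C(H_ p)].
Proof.
move=> c0C; have SHp := @SH gT n k hn p.
have fixS : forall kk x, kk \in 'C(H_ p) -> x \in S_ p -> x ^ kk = x.
  by move=> kk x kC xS; rewrite /conjg -(centP kC x (subsetP SHp _ xS)) mulKg.
apply/setP => [[g c]]; rewrite !inE /=; apply/idP/idP.
- case/andP => cC /eqP E.
  pose kk := g * g0^-1.
  have E' : cj kk (tr p c) = tr p c0.
    by rewrite -cj_cj E cjK.
  have Ei : forall i, i != i0 -> p.1 i ^ kk = p.1 i.
    move=> i ni; have := congr1 (fun q : P => q.1 i) E'.
    by rewrite /= !ffunE (negPf ni).
  have E2 : forall i, p.2 i ^ kk = p.2 i.
    by move=> i; have := congr1 (fun q : P => q.2 i) E'; rewrite /= !ffunE.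
  have Et : (tt_ p * c) ^ kk = tt_ p * c0.
    by have := congr1 (fun q : P => q.1 i0) E'; rewrite /= !ffunE eqxx.
  have kC : kk \in 'C(H_ p).
    rewrite /H_ cent_gen; apply/centP => _ /imset2P [x z xS zC ->].
    case/cycleP: zC => j ->.
    have xH : x \in H_ p := subsetP SHp _ xS.
    have xk : x ^ kk = x.
      move: xS; rewrite inE => /orP [/existsP [i /andP [ni /eqP ->]]|
                                   /existsP [i /eqP ->]]; [exact: Ei | exact: E2].
    apply: commute_sym; apply/commgP/conjg_fixP.
    by rewrite -(@SL gT n k hn p c x j cC xH) conjJg xk conjXg Et (@SL gT n k hn p c0 x j c0C xH) (@SL gT n k hn p c x j cC xH).
  apply/imsetP; exists kk => //.
  have gE : g = kk * g0 by rewrite /kk mulgVK.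
  rewrite -gE; congr pair.
  apply: (mulgI (tt_ p)).
  rewrite -[tt_ p * c](conjgK kk) Et !conjgE invgK !mulgA mulgV mul1g.
  done.
- case/imsetP => kk kC [-> ->].
  have kt : kk ^ tt_ p \in 'C(H_ p) by rewrite memJ_norm // tNC.
  have cin : kk ^ tt_ p * c0 * kk^-1 \in 'C(H_ p).
    by apply: groupM; [apply: groupM | rewrite groupV].
  rewrite cin /=.
  rewrite -cj_cj; apply/eqP; congr (cj g0 _).
  clear cin; case: p c0C kC SHp fixS kt => a b c0C kC SHp fixS kt.
  rewrite /cj /tr /=; congr pair; apply/ffunP => i; rewrite !ffunE.
    have [ei|ni] := eqVneq i i0.
      subst i.
      by rewrite /tt_ /= !conjgE !mulgA mulgVK mulgK mulVg mul1g.
    apply: fixS => //; rewrite inE; apply/orP; left; apply/existsP; exists i.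
    by rewrite ni eqxx.
  apply: fixS => //; rewrite inE; apply/orP; right; apply/existsP; exists i.
  by rewrite /=.
Qed.
End Count.

End Part3.
Import Part3.

Module Part4.
Local Set Implicit Arguments. Local Unset Strict Implicit.
Import GroupScope.
Local Open Scope group_scope.

Section Count2.
Variables (gT : finGroupType) (n k : nat) (hn : 0 < n).
Notation P := ({ffun 'I_n -> gT} * {ffun 'I_k -> gT})%type.
Notation H_ := (@H_ gT n k hn).
Notation tr := (@tr gT n k hn).
Notation cj := (@cj gT n k).
Notation O := (@O gT n k hn).

Lemma O_card p : #|O p| = #|[set: gT]|.
Proof.
have cpos := cardG_gt0 [group of 'C(H_ p)].
suff E : #|setX [set: gT] 'C(H_ p)| = (#|O p| * #|'C(H_ p)|)%N.
  by rewrite cardsX in E; apply/eqP; rewrite -(eqn_pmul2r cpos) -E.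
rewrite -sum1_card (partition_big_imset (fun x : gT * gT => cj x.1 (tr p x.2))).
rewrite -/(O p) -sum_nat_const; apply: eq_bigr => q /imsetP [[g0 c0]].
rewrite inE /= => /andP [_ c0C] ->.
rewrite sum1dep_card /=.
have -> : [set x | (x \in setX [set: gT] 'C(H_ p)) &&
                  (cj x.1 (tr p x.2) == cj g0 (tr p c0))]
   = [set x in setX [set: gT] 'C(H_ p) | cj x.1 (tr p x.2) == cj g0 (tr p c0)]
  by [].
rewrite fiber // card_imset //.
by move=> x y [] /mulIg.
Qed.
End Count2.

Section Final.
Variables (gT : finGroupType) (n k : nat) (hn : 0 < n) (w : word n).
Variable (hw : in_commutator_subgroup w).
Variables (C : 'I_k -> {set gT}) (hC : forall i, C i \in classes [set: gT]).
Notation P := ({ffun 'I_n -> gT} * {ffun 'I_k -> gT})%type.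
Notation H_ := (@H_ gT n k hn).
Notation tr := (@tr gT n k hn).
Notation cj := (@cj gT n k).
Notation O := (@O gT n k hn).

Definition X : {set P} := [set p : P | [forall i, p.2 i \in C i] &&
        (word_eval p.1 w * \prod_(i < k) p.2 i == 1)].

Lemma we_ffun (f : 'I_n -> gT) v : word_eval [ffun i => f i] v = word_eval f v.
Proof. by rewrite /word_eval; apply: eq_bigr => l _; rewrite ffunE. Qed.

Lemma we_conj (u : 'I_n -> gT) g v :
  word_eval (fun i => u i ^ g) v = (word_eval u v) ^ g.
Proof.
elim: v => [|l v IH]; first by rewrite !we_nil conj1g.
by rewrite !we_cons IH conjMg; case: (l.2); rewrite ?conjVg.
Qed.

Lemma X_cj p g : p \in X -> cj g p \in X.
Proof.
rewrite !inE => /andP [/forallP Cp /eqP E]; apply/andP; split.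
  apply/forallP => i; rewrite /cj /= ffunE.
  have /imsetP [x _ Cx] := hC i.
  move: (Cp i); rewrite Cx => /imsetP [y _ ->].
  by rewrite -conjgM; apply: memJ_class; rewrite inE.
rewrite /cj /= we_ffun we_conj.
rewrite (eq_bigr (fun i => p.2 i ^ g)); last by move=> i _; rewrite ffunE.
rewrite -(big_morph (conjg^~ g) (fun x y => conjMg x y g) (conj1g g)).
by rewrite -conjMg E conj1g.
Qed.

Lemma X_tr p c : p \in X -> c \in 'C(H_ p) -> tr p c \in X.
Proof.
by rewrite !inE /= => /andP [Cp E] cC; rewrite Cp (we_tr cC hw).
Qed.

Lemma O_sub p : p \in X -> O p \subset X.
Proof.
move=> pX; apply/subsetP => y /imsetP [[g c]]; rewrite inE /= => /andP [_ cC] ->.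
by apply: X_cj; apply: X_tr.
Qed.

Lemma O_eq p q : q \in O p -> O q = O p.
Proof.
move=> qO; apply/eqP; rewrite eqEcard O_trans //= !O_card leqnn.
by [].
Qed.

Lemma final : #|[set: gT]| %| #|X|.
Proof.
have part : partition (O @: X) X.
  apply/and3P; split.
  - rewrite eqEsubset; apply/andP; split.
      apply/bigcupsP => _ /imsetP [p pX ->]; exact: O_sub.
    apply/subsetP => p pX; apply/bigcupP; exists (O p); first exact: imset_f.
    exact: O_self.
  - apply/trivIsetP => _ _ /imsetP [p _ ->] /imsetP [p' _ ->] ne.
    apply/pred0P => q /=; apply/negbTE/negP => /andP [q1 q2].
    by move/negP: ne; apply; rewrite -(O_eq q1) -(O_eq q2).
  - apply/imsetP => [[p _ e]].
    by have := O_self hn p; rewrite -e inE.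
rewrite (card_partition part).
rewrite (eq_bigr (fun _ => #|[set: gT]|)); last first.
  by move=> _ /imsetP [p _ ->]; rewrite O_card.
by rewrite sum_nat_const dvdn_mull.
Qed.
End Final.

End Part4.
Import Part4.

Theorem mainTheorem7 (n k : nat) (hn : 0 < n) (w : word n)
  (hw : in_commutator_subgroup w) (gT : finGroupType)
  (C : 'I_k -> {set gT}) (hC : forall i, C i \in classes [set: gT]) :
  #|[set: gT]| %|
    #|[set p : {ffun 'I_n -> gT} * {ffun 'I_k -> gT} |
        [forall i, p.2 i \in C i] &&
        (word_eval p.1 w * \prod_(i < k) p.2 i == 1)%g]|.
Proof.
exact: (final hn hw hC).
Qed.
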